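(* Let $p$ be an odd prime, $\mathfrak{g}$ a finite nilpotent Lie ring of $p$-power order, $f\in\mathfrak{g}^*$, and $\mathfrak{p}_1,\mathfrak{p}_2$ polarizations of $f$. Then there exists a chain of polarizations $\mathfrak{p}_1=\mathfrak{q}_1,\mathfrak{q}_2,\ldots,\mathfrak{q}_m=\mathfrak{p}_2$ of $f$ such that $\mathfrak{q}_i$ and $\mathfrak{q}_{i+1}$ are neighbors for every $i<m$.
   Context: A Lie ring is an abelian group with a biadditive bracket satisfying the Jacobi identity and $[x,x]=0$. $\mathfrak{g}^*=\mathrm{Hom}(\mathfrak{g},\mathbb{C}^\times)$. A polarization of $f$ is a Lie subring $\mathfrak{p}\subseteq\mathfrak{g}$ with $f([\mathfrak{p},\mathfrak{p}])=\{1\}$ that is maximal among all additive subgroups of $\mathfrak{g}$ with this property. Two polarizations $\mathfrak{p}_1,\mathfrak{p}_2$ of $f$ are neighbors if $[\mathfrak{p}_1,\mathfrak{p}_2]\subseteq\mathfrak{p}_1\cap\mathfrak{p}_2$. *)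

(* Defs.v *)
From mathcomp Require Import all_boot all_order all_algebra all_field.
Set Implicit Arguments. Unset Strict Implicit. Unset Printing Implicit Defensive.
Import GRing.Theory.
Local Open Scope ring_scope.

Definition lie_bracket (T : zmodType) (br : T -> T -> T) : Prop :=
  [/\ (forall x y z, br (x + y) z = br x z + br y z),
      (forall x y z, br x (y + z) = br x y + br x z),
      (forall x, br x x = 0) &
      (forall x y z, br x (br y z) + br y (br z x) + br z (br x y) = 0)].

Definition addsubgroup (T : finZmodType) (A : {set T}) : bool :=
  (0 \in A) && [forall x in A, forall y in A, x - y \in A].

Definition lie_subring (T : finZmodType) (br : T -> T -> T) (A : {set T}) : bool :=
  addsubgroup A && [forall x in A, forall y in A, br x y \in A].

Definition addgen (T : finZmodType) (A : {set T}) : {set T} :=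
  [set x | [forall H : {set T}, (addsubgroup H && (A \subset H)) ==> (x \in H)]].

(* lower central series: g^1 = g, g^{k+1} = <[g, g^k]> (indexed from 0 here) *)
Fixpoint lcs (T : finZmodType) (br : T -> T -> T) (k : nat) : {set T} :=
  match k with
  | 0 => [set: T]
  | k'.+1 => addgen [set br x y | x in [set: T], y in lcs br k']
  end.

Definition lie_nilpotent (T : finZmodType) (br : T -> T -> T) : Prop :=
  exists k, lcs br k = [set 0].

(* f in g^* = Hom(g, C^x); values taken in algC (the algebraic complex numbers),
   which contain all roots of unity, hence all values of such f on a finite group. *)
Definition dual_elt (T : zmodType) (f : T -> algC) : Prop :=
  (forall x y, f (x + y) = f x * f y) /\ (forall x, f x != 0).

(* f([A, A]) = {1}: f is trivial on all brackets of elements of A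
   (equivalently on the additive subgroup they generate, f being additive). *)
Definition isotropic (T : finZmodType) (br : T -> T -> T) (f : T -> algC) (A : {set T}) : Prop :=
  forall x y, x \in A -> y \in A -> f (br x y) = 1.

Definition polarization (T : finZmodType) (br : T -> T -> T) (f : T -> algC) (P : {set T}) : Prop :=
  [/\ lie_subring br P, isotropic br f P &
      forall S : {set T}, addsubgroup S -> P \subset S -> isotropic br f S -> S = P].

Definition neighbors (T : finZmodType) (br : T -> T -> T) (P1 P2 : {set T}) : Prop :=
  forall x y, x \in P1 -> y \in P2 -> br x y \in P1 :&: P2.

(* Main.v *)
Require Import Defs.
From mathcomp Require Import all_boot all_order all_algebra all_fingroup all_solvable all_field.
Set Implicit Arguments. Unset Strict Implicit. Unset Printing Implicit Defensive.
Import GRing.Theory.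
Local Open Scope ring_scope.

Lemma br0l (T : zmodType) (br : T -> T -> T) : lie_bracket br -> forall z, br 0 z = 0.
Proof.
case=> Hl _ _ _ z; have h := Hl 0 0 z; rewrite addr0 in h.
by apply: (addrI (br 0 z)); rewrite addr0 -h.
Qed.

Lemma br0r (T : zmodType) (br : T -> T -> T) : lie_bracket br -> forall z, br z 0 = 0.
Proof.
case=> _ Hr _ _ z; have h := Hr z 0 0; rewrite addr0 in h.
by apply: (addrI (br z 0)); rewrite addr0 -h.
Qed.

Lemma brNl (T : zmodType) (br : T -> T -> T) : lie_bracket br -> forall x z, br (- x) z = - br x z.
Proof.
move=> H x z; have h := (let: And4 Hl _ _ _ := H in Hl) x (- x) z.
rewrite subrr br0l // in h; apply/eqP; rewrite -addr_eq0 addrC; apply/eqP; by rewrite h.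
Qed.

Lemma brNr (T : zmodType) (br : T -> T -> T) : lie_bracket br -> forall x z, br z (- x) = - br z x.
Proof.
move=> H x z; have h := (let: And4 _ Hr _ _ := H in Hr) z x (- x).
rewrite subrr br0r // in h; apply/eqP; rewrite -addr_eq0 addrC; apply/eqP; by rewrite h.
Qed.

Lemma brBl (T : zmodType) (br : T -> T -> T) : lie_bracket br -> forall x y z, br (x - y) z = br x z - br y z.
Proof. move=> H x y z; case: (H) => Hl _ _ _; by rewrite Hl brNl. Qed.

Lemma brBr (T : zmodType) (br : T -> T -> T) : lie_bracket br -> forall x y z, br z (x - y) = br z x - br z y.
Proof. move=> H x y z; case: (H) => _ Hr _ _; by rewrite Hr brNr. Qed.

Lemma brMnl (T : zmodType) (br : T -> T -> T) : lie_bracket br -> forall x z n, br (x *+ n) z = br x z *+ n.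
Proof.
move=> H x z; elim=> [|n IH]; first by rewrite !mulr0n br0l.
case: (H) => Hl _ _ _; by rewrite !mulrS Hl IH.
Qed.

Lemma brMnr (T : zmodType) (br : T -> T -> T) : lie_bracket br -> forall x z n, br z (x *+ n) = br z x *+ n.
Proof.
move=> H x z; elim=> [|n IH]; first by rewrite !mulr0n br0r.
case: (H) => _ Hr _ _; by rewrite !mulrS Hr IH.
Qed.

Lemma brA (T : zmodType) (br : T -> T -> T) : lie_bracket br -> forall x y, br x y = - br y x.
Proof.
move=> H x y; case: (H) => Hl Hr Ha _; have h := Ha (x + y).
rewrite Hl !Hr !Ha add0r addr0 in h; apply/eqP; by rewrite -addr_eq0 h.
Qed.

Lemma f0 (T : zmodType) (f : T -> algC) : dual_elt f -> f 0 = 1.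
Proof.
case=> Hm Hn; have h := Hm 0 0; rewrite addr0 in h.
apply: (mulfI (Hn 0)); by rewrite mulr1 -h.
Qed.

Lemma fN (T : zmodType) (f : T -> algC) : dual_elt f -> forall x, f (- x) = (f x)^-1.
Proof.
move=> H x; case: (H) => Hm Hn; have h := Hm x (- x); rewrite subrr f0 // in h.
apply: (mulfI (Hn x)); by rewrite -h divff.
Qed.

Lemma fB (T : zmodType) (f : T -> algC) : dual_elt f -> forall x y, f (x - y) = f x / f y.
Proof. move=> H x y; case: (H) => Hm _; by rewrite Hm fN. Qed.

Lemma fMn (T : zmodType) (f : T -> algC) : dual_elt f -> forall x n, f (x *+ n) = f x ^+ n.
Proof.
move=> H x; elim=> [|n IH]; first by rewrite mulr0n expr0 f0.
case: (H) => Hm _; by rewrite mulrS Hm IH exprS.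
Qed.

Lemma card_mulrn (T : finZmodType) (x : T) : x *+ #|T| = 0.
Proof.
rewrite -FinRing.zmodXgE -cardsT.
by have := @expg_cardG T [set: T]%G x (in_setT x).
Qed.


Lemma sg0 (T : finZmodType) (A : {set T}) : addsubgroup A -> 0 \in A.
Proof. by case/andP. Qed.

Lemma sgB (T : finZmodType) (A : {set T}) : addsubgroup A -> forall x y, x \in A -> y \in A -> x - y \in A.
Proof. case/andP=> _ /forallP H x y Hx Hy. by have /implyP/(_ Hx)/forallP/(_ y)/implyP/(_ Hy) := H x. Qed.

Lemma mk_sg (T : finZmodType) (A : {set T}) : 0 \in A -> (forall x y, x \in A -> y \in A -> x - y \in A) -> addsubgroup A.
Proof.
move=> H0 H; apply/andP; split=> //; apply/forallP=> x; apply/implyP=> Hx.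
apply/forallP=> y; apply/implyP=> Hy; exact: H.
Qed.

Lemma sgN (T : finZmodType) (A : {set T}) : addsubgroup A -> forall x, x \in A -> - x \in A.
Proof. move=> H x Hx; rewrite -sub0r; apply: sgB => //; exact: sg0. Qed.

Lemma sgD (T : finZmodType) (A : {set T}) : addsubgroup A -> forall x y, x \in A -> y \in A -> x + y \in A.
Proof. move=> H x y Hx Hy; rewrite -(opprK y); apply: sgB => //; exact: sgN. Qed.

Lemma sgMn (T : finZmodType) (A : {set T}) : addsubgroup A -> forall x n, x \in A -> x *+ n \in A.
Proof. move=> H x n Hx; elim: n => [|n IH]; first by rewrite mulr0n sg0. by rewrite mulrS sgD. Qed.

Lemma addgen_sg (T : finZmodType) (A : {set T}) : addsubgroup (addgen A).
Proof.
apply: mk_sg.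
  rewrite inE; apply/forallP=> H; apply/implyP=> /andP[HH _]; exact: sg0.
move=> x y; rewrite !inE => /forallP Hx /forallP Hy; apply/forallP=> H; apply/implyP=> HH.
have /implyP/(_ HH) := Hx H; have /implyP/(_ HH) := Hy H.
case/andP: HH => HH _ ; move=> a b; exact: sgB.
Qed.

Lemma addgen_ge (T : finZmodType) (A : {set T}) : A \subset addgen A.
Proof.
apply/subsetP=> x Hx; rewrite inE; apply/forallP=> H; apply/implyP=> /andP[_ /subsetP]; exact.
Qed.

Lemma addgen_min (T : finZmodType) (A H : {set T}) : addsubgroup H -> A \subset H -> addgen A \subset H.
Proof.
move=> HH AH; apply/subsetP=> x; rewrite inE => /forallP/(_ H)/implyP; apply; by rewrite HH.
Qed.

Lemma iso_addgen (T : finZmodType) (br : T -> T -> T) (f : T -> algC) (A : {set T}) :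
  lie_bracket br -> dual_elt f -> isotropic br f A -> isotropic br f (addgen A).
Proof.
move=> Hb Hf HA.
pose H1 := [set z | [forall w in A, f (br z w) == 1]].
have sg1 : addsubgroup H1.
  apply: mk_sg; first by rewrite inE; apply/forall_inP=> w _; rewrite br0l // f0.
  move=> x y; rewrite !inE => /forall_inP Hx /forall_inP Hy; apply/forall_inP=> w Hw.
  by rewrite brBl // fB // (eqP (Hx w Hw)) (eqP (Hy w Hw)) divr1.
have AH1 : A \subset H1 by apply/subsetP=> x Hx; rewrite inE; apply/forall_inP=> w Hw; rewrite HA.
have G1 := subsetP (addgen_min sg1 AH1).
pose H2 := [set w | [forall z in addgen A, f (br z w) == 1]].
have sg2 : addsubgroup H2.
  apply: mk_sg; first by rewrite inE; apply/forall_inP=> w _; rewrite br0r // f0.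
  move=> x y; rewrite !inE => /forall_inP Hx /forall_inP Hy; apply/forall_inP=> w Hw.
  by rewrite brBr // fB // (eqP (Hx w Hw)) (eqP (Hy w Hw)) divr1.
have AH2 : A \subset H2.
  apply/subsetP=> w Hw; rewrite inE; apply/forall_inP=> z Hz.
  by have := G1 z Hz; rewrite inE => /forall_inP/(_ w Hw).
move=> x y Hx Hy; have := subsetP (addgen_min sg2 AH2) y Hy.
by rewrite inE => /forall_inP/(_ x Hx)/eqP.
Qed.

Definition pol (T : finZmodType) (br : T -> T -> T) (f : T -> algC) (G P : {set T}) : Prop :=
 [/\ P \subset G, lie_subring br P, isotropic br f P &
     forall S, addsubgroup S -> P \subset S -> S \subset G -> isotropic br f S -> S = P].

Lemma fbrA (T : finZmodType) (br : T -> T -> T) (f : T -> algC) :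
  lie_bracket br -> dual_elt f -> forall x y, f (br x y) = 1 -> f (br y x) = 1.
Proof. move=> Hb Hf x y h; by rewrite brA // fN // h invr1. Qed.

Lemma fbrr (T : finZmodType) (br : T -> T -> T) (f : T -> algC) :
  lie_bracket br -> dual_elt f -> forall x, f (br x x) = 1.
Proof. move=> Hb Hf x; case: (Hb) => _ _ Ha _; by rewrite Ha f0. Qed.

Lemma iso_add1 (T : finZmodType) (br : T -> T -> T) (f : T -> algC) (P : {set T}) u :
  lie_bracket br -> dual_elt f -> isotropic br f P ->
  (forall x, x \in P -> f (br x u) = 1) -> isotropic br f (P :|: [set u]).
Proof.
move=> Hb Hf HP Hu x y; rewrite !inE => /orP[Hx|/eqP->] /orP[Hy|/eqP->].
- exact: HP.
- by apply: Hu.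
- by apply: (fbrA Hb Hf); apply: Hu.
- exact: (fbrr Hb Hf).
Qed.

Lemma perp (T : finZmodType) (br : T -> T -> T) (f : T -> algC) (G P : {set T}) u :
  lie_bracket br -> dual_elt f -> addsubgroup G -> pol br f G P -> u \in G ->
  (forall x, x \in P -> f (br x u) = 1) -> u \in P.
Proof.
move=> Hb Hf HG [PG _ HP Hmax] Hu Hperp.
have sub1 := addgen_ge (P :|: [set u]).
have E : addgen (P :|: [set u]) = P.
  apply: Hmax; first exact: addgen_sg.
  - exact: subset_trans (subsetUl _ _) sub1.
  - by apply: addgen_min => //; rewrite subUset PG sub1set Hu.
  - apply: iso_addgen => //; exact: iso_add1.
by rewrite -E; apply/(subsetP sub1); rewrite !inE eqxx orbT.
Qed.

Definition lrad (T : finZmodType) (br : T -> T -> T) (f : T -> algC) (G : {set T}) : {set T} :=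
  [set c in G | [forall x in G, f (br c x) == 1]].

Lemma radP (T : finZmodType) (br : T -> T -> T) (f : T -> algC) (G : {set T}) c :
  c \in lrad br f G -> c \in G /\ forall x, x \in G -> f (br c x) = 1.
Proof. by rewrite inE => /andP[H /forall_inP H2]; split=> // x /H2/eqP. Qed.

Lemma subr_closed (T : finZmodType) (br : T -> T -> T) (A : {set T}) :
  lie_subring br A -> forall x y, x \in A -> y \in A -> br x y \in A.
Proof.
case/andP=> _ /forall_inP H x y Hx Hy; by have /forall_inP/(_ y Hy) := H x Hx.
Qed.

Lemma mk_subring (T : finZmodType) (br : T -> T -> T) (A : {set T}) :
  addsubgroup A -> (forall x y, x \in A -> y \in A -> br x y \in A) -> lie_subring br A.
Proof.
move=> HA H; apply/andP; split=> //; apply/forall_inP=> x Hx; apply/forall_inP=> y Hy; exact: H.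
Qed.

Lemma step (T : finZmodType) (br : T -> T -> T) (f : T -> algC) (G P : {set T}) y p :
  lie_bracket br -> dual_elt f -> prime p -> lie_subring br G -> pol br f G P ->
  y \in G -> y \notin P ->
  (forall x, x \in G -> br x y \in lrad br f G) ->
  (forall x, x \in G -> f (br x y) ^+ p = 1) ->
  exists Q, [/\ pol br f G Q, neighbors br P Q, y \in Q & forall q, q \in Q -> f (br q y) = 1].
Proof.
move=> Hb Hf pr_p HGr HPol yG yP Hrad Hpow.
have HG : addsubgroup G by case/andP: HGr.
have Hpol := HPol; case: HPol => PG PR HP Hmax.
have HPs : addsubgroup P by case/andP: PR.
have PGs := subsetP PG.
have Hnz : forall x, f x != 0 by case: Hf.
have radP' : forall c, c \in lrad br f G -> c \in P.
  move=> c /radP [cG Hc]; apply: (perp Hb Hf HG Hpol cG) => x Hx.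
  apply: (fbrA Hb Hf); exact: Hc (PGs _ Hx).
pose K := [set x in P | f (br x y) == 1].
have KP : K \subset P by apply/subsetP=> x; rewrite inE => /andP[].
have KPs := subsetP KP.
have sgK : addsubgroup K.
  apply: mk_sg; first by rewrite inE sg0 //= br0l // f0.
  move=> a b; rewrite !inE => /andP[Ha /eqP Ha'] /andP[Hb' /eqP Hb''].
  by rewrite sgB //= brBl // fB // Ha' Hb'' divr1.
have Kbr1 : forall x, x \in P -> br x y \in K.
  move=> x Hx; have /Hrad Hr := PGs _ Hx; rewrite inE radP' //=.
  by case/radP: Hr => _ /(_ y yG) ->.
have Kbr2 : forall x k, x \in P -> k \in K -> br x k \in K.
  move=> x k Hx Hk; have kP := KPs _ Hk; rewrite inE subr_closed //=.
  case: (Hb) => Hl Hr Ha Hj.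
  have E : br (br x k) y = br x (br k y) + br k (br y x).
    rewrite brA //; apply/eqP; rewrite eq_sym -subr_eq0 opprK; apply/eqP; exact: Hj.
  rewrite E; case: (Hf) => Hm _; rewrite Hm HP //; last exact: radP' (Hrad _ (PGs _ kP)).
  rewrite mul1r (HP k (br y x)) // brA //; apply: sgN => //; exact: radP' (Hrad _ (PGs _ Hx)).
have [Q EQ] : {Q | Q = addgen (K :|: [set y])} by exists (addgen (K :|: [set y])).
have sgQ : addsubgroup Q by rewrite EQ; apply: addgen_sg.
have geQ : forall x, x \in K :|: [set y] -> x \in Q.
  by rewrite EQ; apply/subsetP; apply: addgen_ge.
have yQ : y \in Q by apply: geQ; rewrite !inE eqxx orbT.
have KQ : forall k, k \in K -> k \in Q by move=> k Hk; apply: geQ; rewrite inE Hk.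
have QG : Q \subset G.
  by rewrite EQ; apply: addgen_min => //; rewrite subUset sub1set yG (subset_trans KP PG).
have Q0 : forall q, q \in Q -> f (br q y) = 1.
  pose g0 := [set x in G | f (br x y) == 1].
  have sg0' : addsubgroup g0.
    apply: mk_sg; first by rewrite inE sg0 //= br0l // f0.
    move=> a b; rewrite !inE => /andP[Ha /eqP Ha'] /andP[Hb' /eqP Hb''].
    by rewrite sgB //= brBl // fB // Ha' Hb'' divr1.
  have : Q \subset g0.
    rewrite EQ; apply: addgen_min => //; apply/subsetP=> x; rewrite !inE => /orP[|/eqP->].
      by case/andP=> /PGs -> ->.
    by rewrite yG (fbrr Hb Hf y) eqxx.
  by move/subsetP=> H q /H; rewrite inE => /andP[_ /eqP].
have isoQ : isotropic br f Q.
  rewrite EQ; apply: iso_addgen => //; apply: iso_add1 => //.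
    move=> a b Ha Hb0; apply: HP; exact: KPs.
  by move=> x; rewrite inE => /andP[_ /eqP].
have PQK : forall x q, x \in P -> q \in Q -> br x q \in K.
  pose H := [set z | [forall x in P, br x z \in K]].
  have sgH : addsubgroup H.
    apply: mk_sg; first by rewrite inE; apply/forall_inP=> x _; rewrite br0r // sg0.
    move=> a b; rewrite !inE => /forall_inP Ha /forall_inP Hb0; apply/forall_inP=> x Hx.
    by rewrite brBr // sgB // ?Ha ?Hb0.
  have : Q \subset H.
    rewrite EQ; apply: addgen_min => //; apply/subsetP=> z; rewrite in_setU in_set1 => /orP[Hz|/eqP->];
    rewrite inE; apply/forall_inP=> x Hx; [exact: Kbr2 | exact: Kbr1].
  by move/subsetP=> HQ x q Hx /HQ; rewrite inE => /forall_inP/(_ x Hx).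
have QR : lie_subring br Q.
  apply: mk_subring => //.
  pose H := [set z | [forall b in Q, br z b \in Q]].
  have sgH : addsubgroup H.
    apply: mk_sg; first by rewrite inE; apply/forall_inP=> x _; rewrite br0l // sg0.
    move=> a b; rewrite !inE => /forall_inP Ha /forall_inP Hb0; apply/forall_inP=> x Hx.
    by rewrite brBl // sgB // ?Ha ?Hb0.
  pose H2 := [set b | br y b \in Q].
  have sgH2 : addsubgroup H2.
    apply: mk_sg; first by rewrite inE br0r // sg0.
    move=> a b; rewrite !inE => Ha Hb0; by rewrite brBr // sgB.
  have QH2 : Q \subset H2.
    rewrite EQ; apply: addgen_min => //; apply/subsetP=> z; rewrite in_setU in_set1 => /orP[Hz|/eqP->]; rewrite inE.
      by rewrite brA // KQ // sgN // Kbr1 // KPs.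
    by case: (Hb) => _ _ -> _; rewrite sg0.
  have : Q \subset H.
    rewrite EQ; apply: addgen_min => //; apply/subsetP=> z; rewrite in_setU in_set1 => /orP[Hz|/eqP->];
    rewrite inE; apply/forall_inP=> b Hb0.
      by apply: KQ; apply: PQK => //; exact: KPs.
    by have := subsetP QH2 b Hb0; rewrite inE.
  by move/subsetP=> HQ a b /HQ; rewrite inE => /forall_inP/(_ b).
exists Q; split=> //.
- split=> // S HS QS SG HSi.
  apply/eqP; rewrite eqEsubset QS andbT; apply/subsetP=> s Hs.
  have sG : s \in G by exact: (subsetP SG).
  have QSs := subsetP QS.
  case: (boolP [forall x in P, f (br x y) == 1]) => [/forall_inP h|/forall_inPn [x0 Hx0 Hne]].
    by case/negP: yP; apply: (perp Hb Hf HG Hpol yG) => x /h/eqP.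
  set z := f (br x0 y) in Hne.
  have x0G := PGs _ Hx0.
  have zp : z ^+ p = 1 by exact: Hpow.
  have zprim : p.-primitive_root z.
    have [m Hm mp] := prim_order_exists (prime_gt0 pr_p) zp.
    case/primeP: pr_p => _ /(_ m mp) /orP[/eqP m1|/eqP <-] //.
    by move: (prim_expr_order Hm); rewrite m1 expr1 => ez; rewrite ez eqxx in Hne.
  have Kx : forall x j, x \in P -> f (br x y) = z ^+ j -> x - x0 *+ j \in K.
    move=> x j Hx Ej; rewrite inE sgB ?sgMn //= brBl // brMnl // fB // fMn // Ej.
    by rewrite divff ?eqxx // expf_neq0 // Hnz.
  have psip : f (br x0 s) ^+ p = 1.
    rewrite -fMn // -brMnl //; apply: HSi => //; apply: QSs; apply: KQ.
    by rewrite inE sgMn //= brMnl // fMn // -/z zp eqxx.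
  have [m Em] := prim_rootP zprim psip.
  pose u := s - y *+ m.
  have uG : u \in G by rewrite sgB // sgMn.
  have uP : u \in P.
    apply: (perp Hb Hf HG Hpol uG) => x Hx.
    have [j Ej] := prim_rootP zprim (Hpow x (PGs _ Hx)).
    have Hk := Kx x j Hx Ej.
    rewrite /u brBr // brMnr // fB // fMn // Ej.
    case: (Hb) => Hl _ _ _; case: (Hf) => Hm _.
    rewrite -(subrK (x0 *+ j) x) Hl Hm brMnl // fMn // -/z.
    rewrite (HSi _ _ (QSs _ (KQ _ Hk)) Hs) mul1r Em -!exprM mulnC divff //.
    by rewrite expf_neq0 // Hnz.
  have uK : u \in K.
    rewrite inE uP /u brBl // brMnl // fB // fMn // (fbrr Hb Hf) expr1n divr1.
    by rewrite (HSi s y Hs (QSs _ yQ)) eqxx.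
  by rewrite -(subrK (y *+ m) s) sgD // ?sgMn // KQ.
- move=> x q Hx Hq; have Hk := PQK x q Hx Hq; rewrite inE KPs //=; exact: KQ.
Qed.

Inductive conn (T : finZmodType) (br : T -> T -> T) (f : T -> algC) (G : {set T}) :
  {set T} -> {set T} -> Prop :=
| conn0 P : conn br f G P P
| connS P Q R : pol br f G P -> pol br f G Q -> neighbors br P Q -> conn br f G Q R -> conn br f G P R.

Lemma conn_trans (T : finZmodType) (br : T -> T -> T) (f : T -> algC) (G : {set T}) P Q R :
  conn br f G P Q -> conn br f G Q R -> conn br f G P R.
Proof. elim=> // P' Q' R' H1 H2 H3 _ IH /IH; exact: connS. Qed.

Lemma conn_mono (T : finZmodType) (br : T -> T -> T) (f : T -> algC) (G0 G : {set T}) P Q :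
  (forall X, pol br f G0 X -> pol br f G X) -> conn br f G0 P Q -> conn br f G P Q.
Proof.
move=> H; elim=> [P'|P' Q' R' H1 H2 H3 _ IH]; first exact: conn0.
apply: connS IH; by [apply: H | apply: H |].
Qed.

Lemma neighbors_sym (T : finZmodType) (br : T -> T -> T) P Q :
  lie_bracket br -> addsubgroup P -> addsubgroup Q -> neighbors br P Q -> neighbors br Q P.
Proof.
move=> Hb HP HQ H x y Hx Hy; rewrite setIC brA //.
have := H y x Hy Hx; rewrite !inE => /andP[H1 H2].
by rewrite !sgN.
Qed.

Fixpoint cser (T : finZmodType) (br : T -> T -> T) (G : {set T}) (k : nat) : {set T} :=
  match k with
  | 0 => G
  | k'.+1 => [set br x z | x in G, z in cser br G k']
  end.

Lemma cser_G (T : finZmodType) (br : T -> T -> T) (G : {set T}) k :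
  lie_subring br G -> cser br G k \subset G.
Proof.
move=> HG; elim: k => [|k IH] //=; apply/subsetP=> w /imset2P[x z Hx Hz ->].
apply: subr_closed => //; exact: (subsetP IH).
Qed.

Lemma cser_lcs (T : finZmodType) (br : T -> T -> T) (G : {set T}) k :
  cser br G k \subset lcs br k.
Proof.
elim: k => [|k IH] /=; first exact: subsetT.
apply/subsetP=> w /imset2P[x z Hx Hz ->]; apply: (subsetP (addgen_ge _)).
apply/imset2P; exists x z => //; exact: (subsetP IH).
Qed.

Lemma rad_sg (T : finZmodType) (br : T -> T -> T) (f : T -> algC) (G : {set T}) :
  lie_bracket br -> dual_elt f -> addsubgroup G -> addsubgroup (lrad br f G).
Proof.
move=> Hb Hf HG; apply: mk_sg.
  rewrite inE sg0 //=; apply/forall_inP=> x _; by rewrite br0l // f0.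
move=> a b /radP[Ha Ha'] /radP[Hb' Hb'']; rewrite inE sgB //=.
apply/forall_inP=> x Hx; by rewrite brBl // fB // Ha' // Hb'' // divr1.
Qed.

Lemma main (T : finZmodType) (br : T -> T -> T) (f : T -> algC) p :
  lie_bracket br -> dual_elt f -> prime p -> (exists n, #|T| = (p ^ n)%N) -> lie_nilpotent br ->
  forall N (G : {set T}), (#|G| <= N)%N -> lie_subring br G ->
  forall P1 P2, pol br f G P1 -> pol br f G P2 -> conn br f G P1 P2.
Proof.
move=> Hb Hf pr_p [n Hn] [k0 Hk0].
have Hnz : forall x, f x != 0 by case: Hf.
elim=> [|N IH] G HN HGr P1 P2 HP1 HP2.
  have HG : addsubgroup G by case/andP: HGr.
  by move: HN; rewrite leqn0 cards_eq0 => /eqP GE; move: (sg0 HG); rewrite GE inE.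
have HG : addsubgroup G by case/andP: HGr.
have rsg := rad_sg Hb Hf HG.
case: (boolP (G \subset lrad br f G)) => [Hsub|Hnsub].
  have isoG : isotropic br f G.
    by move=> x y Hx Hy; case/radP: (subsetP Hsub x Hx) => _ /(_ y Hy).
  case: HP1 => P1G _ _ Hm1; case: HP2 => P2G _ _ Hm2.
  rewrite -(Hm1 G HG P1G (subxx _) isoG) -(Hm2 G HG P2G (subxx _) isoG); exact: conn0.
have [y0 [y0G y0r Hy0]] : exists y0, [/\ y0 \in G, y0 \notin lrad br f G &
    forall x, x \in G -> br x y0 \in lrad br f G].
  have ex : exists k, cser br G k \subset lrad br f G.
    exists k0; apply: subset_trans (@cser_lcs _ br G k0) _; rewrite Hk0 sub1set.
    exact: sg0.
  case: (ex_minnP ex) => m Hm Hmin.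
  case: m Hm Hmin => [|m] Hm Hmin; first by rewrite /= Hm in Hnsub.
  have : ~~ (cser br G m \subset lrad br f G).
    by apply/negP=> /Hmin; rewrite ltnn.
  case/subsetPn=> y0 Hy0 Hy0r; exists y0; split => //.
    exact: (subsetP (cser_G m HGr)).
  move=> x Hx; apply: (subsetP Hm); apply/imset2P; by exists x y0.
have [y [yG yr Hy Hyp]] : exists y, [/\ y \in G, y \notin lrad br f G,
    (forall x, x \in G -> br x y \in lrad br f G) & y *+ p \in lrad br f G].
  have ex : exists j, y0 *+ (p ^ j) \in lrad br f G.
    by exists n; rewrite -Hn card_mulrn sg0.
  case: (ex_minnP ex) => j Hj Hmin.
  case: j Hj Hmin => [|j] Hj Hmin; first by rewrite expn0 mulr1n (negbTE y0r) in Hj.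
  exists (y0 *+ (p ^ j)); split; first exact: sgMn.
  - by apply/negP=> /Hmin; rewrite ltnn.
  - by move=> x Hx; rewrite brMnr // sgMn // Hy0.
  - by rewrite -mulrnA -expnSr.
have Hpow : forall x, x \in G -> f (br x y) ^+ p = 1.
  move=> x Hx; rewrite -fMn // -brMnr //; apply: (fbrA Hb Hf).
  by case/radP: Hyp => _ /(_ x Hx).
pose g0 := [set x in G | f (br x y) == 1].
have g0G : g0 \subset G by apply/subsetP=> x; rewrite inE => /andP[].
have yg0 : y \in g0 by rewrite inE yG (fbrr Hb Hf) eqxx.
have sgg0 : addsubgroup g0.
  apply: mk_sg; first by rewrite inE sg0 //= br0l // f0.
  move=> a b; rewrite !inE => /andP[Ha /eqP Ha'] /andP[Hb' /eqP Hb''].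
  by rewrite sgB //= brBl // fB // Ha' Hb'' divr1.
have g0r : lie_subring br g0.
  apply: mk_subring => // a b; rewrite !inE => /andP[Ha /eqP Ha'] /andP[Hb' /eqP Hb''].
  rewrite subr_closed //=.
  case: (Hb) => Hl Hr Ha0 Hj.
  have E : br (br a b) y = br a (br b y) + br b (br y a).
    rewrite brA //; apply/eqP; rewrite eq_sym -subr_eq0 opprK; apply/eqP; exact: Hj.
  case: (Hf) => Hm _; rewrite E Hm.
  rewrite (@fbrA T br f Hb Hf (br b y) a); last by case/radP: (Hy b Hb') => _ /(_ a Ha).
  rewrite (@fbrA T br f Hb Hf (br y a) b) ?mul1r //.
  by case/radP: (sgN rsg (Hy a Ha)) => _ /(_ b Hb'); rewrite -brA.
have ltg0 : (#|g0| <= N)%N.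
  rewrite -ltnS; apply: leq_trans HN; apply: proper_card; apply/properP; split=> //.
  move: yr; rewrite inE yG /= => /forall_inPn [x1 Hx1 Hne]; exists x1 => //.
  rewrite inE Hx1 /=; apply/negP => /eqP h; by rewrite (fbrA Hb Hf h) eqxx in Hne.
have lift : forall X, pol br f g0 X -> pol br f G X.
  move=> X [Xg0 XR XI Xmax].
  have yX : y \in X.
    apply: (perp Hb Hf sgg0 (And4 Xg0 XR XI Xmax) yg0) => x Hx.
    by have := subsetP Xg0 x Hx; rewrite inE => /andP[_ /eqP].
  split => //; first exact: subset_trans Xg0 g0G.
  move=> S HS XS SG SI; apply: Xmax => //.
  apply/subsetP=> s Hs; rewrite inE (subsetP SG s Hs) /=; by rewrite SI // (subsetP XS).
have adj : forall P, pol br f G P ->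
    exists Q, [/\ conn br f G P Q, conn br f G Q P & pol br f g0 Q].
  move=> P HP; have HP' := HP; case: HP' => PG PR PI Pmax.
  have tog0 : forall Q, pol br f G Q -> (forall q, q \in Q -> f (br q y) = 1) -> pol br f g0 Q.
    move=> Q [QG QR QI Qmax] HQ; split => //.
      by apply/subsetP=> q Hq; rewrite inE (subsetP QG q Hq) HQ // eqxx.
    move=> S HS QS Sg0 SI; apply: Qmax => //; exact: subset_trans Sg0 g0G.
  case: (boolP (y \in P)) => yP.
    exists P; split; [exact: conn0 | exact: conn0 | apply: tog0 => // q Hq; exact: PI].
  have [Q [HQ nPQ yQ Q0]] := step Hb Hf pr_p HGr HP yG yP Hy Hpow.
  exists Q; split; last exact: tog0.
  - apply: connS HP HQ nPQ _; exact: conn0.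
  - apply: (connS HQ HP); last exact: conn0.
    apply: neighbors_sym => //; [by case/andP: PR | by case: HQ => _ /andP[]].
have [Q1 [c11 _ h1]] := adj P1 HP1.
have [Q2 [_ c22 h2]] := adj P2 HP2.
apply: conn_trans c11 _; apply: conn_trans _ c22; apply: conn_mono lift _.
exact: IH g0 ltg0 g0r Q1 Q2 h1 h2.
Qed.

Close Scope ring_scope.

Theorem lemma2p6 (p : nat) (T : finZmodType) (br : T -> T -> T) (f : T -> algC)
    (P1 P2 : {set T}) :
  prime p -> odd p -> (exists n, #|T| = (p ^ n)%N) ->
  lie_bracket br -> lie_nilpotent br -> dual_elt f ->
  polarization br f P1 -> polarization br f P2 ->
  exists qs : seq {set T},
    [/\ last P1 qs = P2,
        (forall q, q \in qs -> polarization br f q) &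
        (forall i, (i < size qs)%N -> neighbors br (nth P1 (P1 :: qs) i) (nth P1 qs i))].
Proof.
move=> pr_p _ Hcard Hb Hnil Hf HP1 HP2.
have HT : lie_subring br [set: T].
  by apply: mk_subring; [apply: mk_sg => *; exact: in_setT | move=> *; exact: in_setT].
have topol : forall P, polarization br f P -> pol br f setT P.
  move=> P [PR PI Pmax]; split => //.
  move=> S HS PS _ SI; exact: Pmax.
have frompol : forall P, pol br f setT P -> polarization br f P.
  move=> P [_ PR PI Pmax]; split => // S HS PS SI; apply: Pmax => //; exact: subsetT.
have := main Hb Hf pr_p Hcard Hnil (leqnn #|[set: T]|) HT (topol _ HP1) (topol _ HP2).
elim=> [P|P Q R HP HQ nPQ _ [qs [Hl Hq Hn]]]; first by exists [::]; split.
exists (Q :: qs); split => //.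
- move=> q; rewrite inE => /orP[/eqP->|/Hq] //; exact: frompol.
- case=> [_|i Hi] //=.
  have Hi' : (i < size qs)%N by [].
  rewrite (@set_nth_default _ (Q :: qs) Q P i); last by rewrite /= ltnW.
  rewrite (@set_nth_default _ qs Q P i) //.
  exact: Hn.
Qed.
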